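(* Let $M$ and $M'$ be two stable matchings in an instance $I$ of SPA-S, and let $M^\land$ be the assignment defined from $M,M'$ in the context. If a project $p_j$ is undersubscribed in $M^\land$, then $p_j$ is undersubscribed in at least one of $M$ and $M'$.
   Context: An instance $I$ of SPA-S consists of a finite set $\mathcal{S}$ of students, a finite set $\mathcal{P}$ of projects and a finite set $\mathcal{L}$ of lecturers. Each student $s_i$ ranks a subset $A_i\subseteq\mathcal{P}$ (its acceptable projects) in strict order. Each project is offered by exactly one lecturer; lecturer $l_k$ offers a nonempty set $P_k\subseteq\mathcal{P}$, the $P_k$ partitioning $\mathcal{P}$. Each lecturer $l_k$ ranks in strict order the students who find at least one project of $P_k$ acceptable. Projects have capacities $c_j\in\mathbb{Z}^+$, lecturers have capacities $d_k\in\mathbb{Z}^+$ with $\max\{c_j:p_j\in P_k\}\le d_k\le\sum\{c_j:p_j\in P_k\}$. A pair $(s_i,p_j)$, $p_j$ offered by $l_k$, is acceptable if $p_j\in A_i$ and $s_i$ is on $l_k$'s list. A matching $M$ is a set of acceptable pairs with each student in at most one pair, $|M(p_j)|\le c_j$, $|M(l_k)|\le d_k$, where for an assignment $M$ (a set of acceptable pairs), $M(s_i)$, $M(p_j)$, $M(l_k)$ denote the project of $s_i$, the students assigned to $p_j$, and the students assigned to projects of $l_k$. Undersubscribed/full means fewer than/exactly capacity many assigned students. An acceptable pair $(s_i,p_j)\notin M$ ($p_j$ offered by $l_k$) blocks $M$ if ($s_i$ is unassigned or prefers $p_j$ to $M(s_i)$) and one of: (P1) $p_j$ and $l_k$ undersubscribed;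 (P2) $p_j$ undersubscribed, $l_k$ full, $s_i\in M(l_k)$; (P3) $p_j$ undersubscribed, $l_k$ full, $l_k$ prefers $s_i$ to the worst student of $M(l_k)$; (P4) $p_j$ full and $l_k$ prefers $s_i$ to the worst student of $M(p_j)$. $M$ is stable if it has no blocking pair. Given stable matchings $M,M'$, $M^\land$ is the assignment in which each student unassigned in both $M$ and $M'$ is unassigned, each student assigned to the same project in both is assigned to that project, and every other student is assigned to the better (in her preference) of her projects in $M$ and $M'$. *)

(* Defs.v *)
From mathcomp Require Import all_boot.
Set Implicit Arguments. Unset Strict Implicit. Unset Printing Implicit Defensive.

Record spa (S P L : finType) := Spa {
  acc   : S -> P -> bool;
  rankS : S -> P -> nat;      (* student's rank of a project (smaller = better) *)
  lect  : P -> L;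
  rankL : L -> S -> nat;      (* lecturer's rank of a student (smaller = better) *)
  cap   : P -> nat;
  lcap  : L -> nat
}.

Section Defs.
Variables (S P L : finType) (I : spa S P L).

Definition on_list (l : L) (s : S) : bool :=
  [exists p : P, (lect I p == l) && acc I s p].

Definition valid_spa : Prop :=
  (forall s p q, acc I s p -> acc I s q -> rankS I s p = rankS I s q -> p = q) /\
  (forall l s t, on_list l s -> on_list l t -> rankL I l s = rankL I l t -> s = t) /\
  (forall l, exists p, lect I p == l) /\
  (forall p, 0 < cap I p) /\
  (forall l, 0 < lcap I l) /\
  (forall l, \max_(p | lect I p == l) cap I p <= lcap I l) /\
  (forall l, lcap I l <= \sum_(p | lect I p == l) cap I p).

Definition acceptable (s : S) (p : P) : bool := acc I s p && on_list (lect I p) s.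

Definition prefS (s : S) (p q : P) : bool := rankS I s p < rankS I s q.
Definition prefL (l : L) (s t : S) : bool := rankL I l s < rankL I l t.

Definition assignment := {ffun S -> option P}.

Definition Mp (M : assignment) (p : P) : {set S} := [set s | M s == Some p].
Definition Ml (M : assignment) (l : L) : {set S} :=
  [set s | if M s is Some p then lect I p == l else false].

Definition is_matching (M : assignment) : Prop :=
  (forall s p, M s = Some p -> acceptable s p) /\
  (forall p, #|Mp M p| <= cap I p) /\
  (forall l, #|Ml M l| <= lcap I l).

Definition p_under (M : assignment) p := #|Mp M p| < cap I p.
Definition p_full  (M : assignment) p := #|Mp M p| == cap I p.
Definition l_under (M : assignment) l := #|Ml M l| < lcap I l.
Definition l_full  (M : assignment) l := #|Ml M l| == lcap I l.

(* "l prefers s to the worst student of set X" *)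
Definition pref_worst (l : L) (s : S) (X : {set S}) : Prop :=
  exists2 t, t \in X & prefL l s t.

Definition blocks (M : assignment) (s : S) (p : P) : Prop :=
  let l := lect I p in
  acceptable s p /\ M s != Some p /\
  (if M s is Some q then prefS s p q else True) /\
  [\/ p_under M p /\ l_under M l,
      [/\ p_under M p, l_full M l & s \in Ml M l],
      [/\ p_under M p, l_full M l & pref_worst l s (Ml M l)] |
      p_full M p /\ pref_worst l s (Mp M p)].

Definition stable (M : assignment) : Prop :=
  is_matching M /\ forall s p, ~ blocks M s p.

Definition meet_assign (M M' : assignment) : assignment :=
  [ffun s => match M s, M' s with
             | None, None => None
             | Some p, None => Some p
             | None, Some q => Some q
             | Some p, Some q =>
                 if p == q then Some p
                 else if prefS s p q then Some p else Some q
             end].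

End Defs.

(* Main.v *)
Require Import Defs.
From mathcomp Require Import all_boot.
From mathcomp Require Import zify.
Set Implicit Arguments. Unset Strict Implicit. Unset Printing Implicit Defensive.



Lemma card_sumb (T : finType) (A : {set T}) : #|A| = \sum_(x : T) (x \in A).
Proof. by rewrite -sum1_card big_mkcond /=; apply: eq_bigr => x _; case: (x \in A). Qed.

Lemma fiber (S P : finType) (f : S -> option P) (X : {set S}) (Q : pred P) :
  \sum_(q | Q q) #|[set s | f s == Some q] :&: X| =
  #|[set s in X | if f s is Some q then Q q else false]|.
Proof.
rewrite card_sumb.
under eq_bigr => q _ do rewrite card_sumb.
rewrite exchange_big /=; apply: eq_bigr => s _.
rewrite [in RHS]inE; case E: (f s) => [q0|] /=.
- case: (boolP (Q q0)) => Hq.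
  + rewrite (bigD1 q0) //= !inE E eqxx /= andbT big1 ?addn0 //.
    move=> q /andP[_ Hn]; rewrite !inE E; case: eqP => // [[Eq]].
    by rewrite Eq eqxx in Hn.
  + rewrite big1 ?andbF // => q Hq'; rewrite !inE E; case: eqP => // [[Eq]].
    by rewrite Eq Hq' in Hq.
- by rewrite big1 ?andbF // => q _; rewrite !inE E.
Qed.

Section Basic.
Variables (S P L : finType) (I : spa S P L).

Definition Uset (M M' : assignment S P) : {set S} :=
  [set s | if M s is Some p then (if M' s is Some q then prefS I s p q else true) else false].

Lemma onl_Mp M p t : is_matching I M -> t \in Mp M p -> on_list I (lect I p) t.
Proof. by case=> Ha _ /[!inE] /eqP/Ha /andP[]. Qed.

Lemma onl_Ml M l t : is_matching I M -> t \in Ml I M l -> on_list I l t.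
Proof.
case=> Ha _; rewrite inE; case E: (M t) => [q|] // /eqP <-.
by case/andP: (Ha _ _ E).
Qed.

Lemma rankL_strict l s t : valid_spa I -> on_list I l s -> on_list I l t -> s != t ->
  ~~ (rankL I l s < rankL I l t) -> rankL I l t < rankL I l s.
Proof.
case=> _ [Hl _] Hs Ht /eqP Hst Hn; rewrite ltn_neqAle leqNgt Hn andbT.
by apply/eqP=> E; apply: Hst; apply: (Hl l s t).
Qed.

Lemma full_of_not_under M p : is_matching I M -> ~ p_under I M p -> p_full I M p.
Proof. case=> _ [Hp _] H; rewrite /p_full eqn_leq Hp /=; rewrite leqNgt; exact/negP. Qed.

Lemma lfull_of_not_under M l : is_matching I M -> ~ l_under I M l -> l_full I M l.
Proof. case=> _ [_ Hl] H; rewrite /l_full eqn_leq Hl /=; rewrite leqNgt; exact/negP. Qed.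

Lemma mkblock (M : assignment S P) s p : acceptable I s p -> M s != Some p ->
  (if M s is Some q then prefS I s p q else true) ->
  [\/ p_under I M p /\ l_under I M (lect I p),
      [/\ p_under I M p, l_full I M (lect I p) & s \in Ml I M (lect I p)],
      [/\ p_under I M p, l_full I M (lect I p) & pref_worst I (lect I p) s (Ml I M (lect I p))] |
      p_full I M p /\ pref_worst I (lect I p) s (Mp M p)] -> blocks I M s p.
Proof. move=> Ha Hn Hp D; split=> //; split=> //; split=> //; by case: (M s) Hp. Qed.

Lemma E_lemma M M' s p : valid_spa I -> is_matching I M -> stable I M' ->
  M s = Some p -> s \in Uset M M' ->
  (p_full I M' p /\ forall t, t \in Mp M' p -> rankL I (lect I p) t < rankL I (lect I p) s) \/
  [/\ p_under I M' p, l_full I M' (lect I p), s \notin Ml I M' (lect I p) &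
      forall t, t \in Ml I M' (lect I p) -> rankL I (lect I p) t < rankL I (lect I p) s].
Proof.
move=> V HM [HM' Hst] Ms; rewrite inE Ms => HU.
have Hacc : acceptable I s p by case: HM => Ha _; exact: Ha.
have Hne : M' s != Some p.
  by apply/eqP=> E; move: HU; rewrite E /prefS ltnn.
have Hsl : on_list I (lect I p) s by case/andP: Hacc.
have Hnb := Hst s p.
have Hpref : if M' s is Some q then prefS I s p q else True by case: (M' s) HU.
have Hsn : s \notin Mp M' p by rewrite inE.

case: (boolP (p_under I M' p)) => Hu.
- right.
  have Hlf : l_full I M' (lect I p).
    apply: lfull_of_not_under => // Hlu; apply: Hnb; apply: mkblock => //.
    by apply: Or41.
  have Hsl' : s \notin Ml I M' (lect I p).
    apply/negP=> Hin; apply: Hnb; apply: mkblock => //; apply: Or42; split=> //.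
  split=> // t Ht; apply: rankL_strict => //.
  + exact: onl_Ml Ht.
  + by apply/eqP=> E; move: Hsl'; rewrite E Ht.
  + apply/negP=> Hlt; apply: Hnb; apply: mkblock => //; apply: Or43; split=> //.
    by exists t.
- left; have Hf : p_full I M' p by apply: full_of_not_under => //; apply/negP.
  split=> // t Ht; apply: rankL_strict => //.
  + exact: onl_Mp Ht.
  + by apply/eqP=> E; move: Hsn; rewrite E Ht.
  + apply/negP=> Hlt; apply: Hnb; apply: mkblock => //; apply: Or44; split=> //.
    by exists t.
Qed.


Lemma U_neq M M' s : s \in Uset M M' -> M s != M' s.
Proof.
rewrite inE; case: (M s) => [p|] //; case: (M' s) => [q|] // H.
by apply/eqP => -[E]; move: H; rewrite E /prefS ltnn.
Qed.

Lemma notU_flip M M' s q : valid_spa I -> is_matching I M -> is_matching I M' ->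
  s \notin Uset M M' -> M' s = Some q -> M s != Some q -> s \in Uset M' M.
Proof.
move=> [VS _] [Ha _] [Ha' _] HU E' Hn; rewrite inE E'.
move: HU Hn; rewrite inE E'; case E: (M s) => [r|] // HU Hn.
have Ar : acc I s r by case/andP: (Ha _ _ E).
have Aq : acc I s q by case/andP: (Ha' _ _ E').
move: HU; rewrite /prefS => HU.
have Hrq : rankS I s r != rankS I s q.
  by apply/eqP => Er; move: Hn; rewrite (VS s r q Ar Aq Er) eqxx.
by rewrite ltn_neqAle eq_sym Hrq /= leqNgt.
Qed.

Lemma card_Ml (M : assignment S P) l : #|Ml I M l| = \sum_(q | lect I q == l) #|Mp M q|.
Proof.
have := fiber M [set: S] (fun q => lect I q == l).
under eq_bigr do rewrite setIT.
move=> ->; by apply: eq_card => s; rewrite !inE.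
Qed.

End Basic.


Lemma arith_le a b c d e f : a + b = e -> c + d = f -> a <= c -> b <= d -> e <= f.
Proof. lia. Qed.
Lemma arith_lt a b c d e f : a + b = e -> c + d = f -> a <= c -> b < d -> e < f.
Proof. lia. Qed.
Lemma arith3 x y v z w : x = 1 + y -> v <= y -> x <= z -> z <= w -> v < w.
Proof. lia. Qed.

Lemma arith4 a1 b1 a2 b2 X Y : a1 + b1 = X -> a2 + b2 = Y -> X <= Y -> b2 <= b1 -> a1 <= a2.
Proof. lia. Qed.
Lemma arith5 a1 b1 a2 b2 X Y : a1 + b1 = X -> a2 + b2 = Y -> X <= Y -> b2 < b1 -> a1 < a2.
Proof. lia. Qed.

Lemma sum_lt (T : finType) (Q : pred T) (F G : T -> nat) q0 : Q q0 ->
  (forall q, Q q -> F q <= G q) -> F q0 < G q0 ->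
  \sum_(q | Q q) F q < \sum_(q | Q q) G q.
Proof.
move=> Hq H Hlt; rewrite (bigD1 q0 Hq) [X in _ < X](bigD1 q0 Hq) /=.
rewrite -addSn; apply: leq_add Hlt _; apply: leq_sum => q /andP[hq _]; exact: H.
Qed.

Section Main.
Variables (S P L : finType) (I : spa S P L) (M M' : assignment S P).
Variables (V : valid_spa I) (HM : stable I M) (HM' : stable I M').

Let U := Uset I M M'.
Let HM0 : is_matching I M := HM.1.
Let HM0' : is_matching I M' := HM'.1.

Lemma proj_nb q :
  (forall u, u \in Mp M q -> u \in U -> ~~ p_under I M' q) ->
  #|Mp M q :&: U| <= #|Mp M' q :&: U| /\
  (forall s0 t0, s0 \in Mp M q -> s0 \notin Mp M' q -> s0 \notin U ->
     t0 \in Mp M' q -> t0 \in U -> #|Mp M q :&: U| < #|Mp M' q :&: U|).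
Proof.
move=> Hnb.
case: (set_0Vmem (Mp M q :&: U)) => [E0 | [u Hu]].
  rewrite E0 cards0; split=> // s0 t0 _ _ _ Ht0 HtU.
  by rewrite card_gt0; apply/set0Pn; exists t0; rewrite inE Ht0.
move: Hu; rewrite inE => /andP[HuA HuU].
have Hun := Hnb u HuA HuU.
have Mu : M u = Some q by move: HuA; rewrite inE => /eqP.
case: (E_lemma V HM0 HM' Mu HuU) => [[Hf Hr] | [Hu' _ _ _]]; last by rewrite Hu' in Hun.
have HBA : (Mp M' q :\: Mp M q) \subset (Mp M' q :&: U).
  apply/subsetP => t; rewrite in_setD in_setI => /andP[HtA HtB]; rewrite HtB /=.
  apply/negPn/negP => HtU.
  have Mt' : M' t = Some q by move: HtB; rewrite inE => /eqP.
  have HtA' : M t != Some q by move: HtA; rewrite inE.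
  have Hfl := notU_flip V HM0 HM0' HtU Mt' HtA'.
  have Hrt := Hr t HtB.
  case: (E_lemma V HM0' HM Mt' Hfl) => [[_ Hr'] | [_ _ _ Hr']].
  + have := Hr' u HuA; lia.
  + have : u \in Ml I M (lect I q) by rewrite inE Mu.
    move/Hr'; lia.
have HAU : Mp M q :&: U \subset Mp M q :\: Mp M' q.
  apply/subsetP=> s; rewrite in_setI in_setD => /andP[HsA HsU]; rewrite HsA andbT.
  have := U_neq HsU; move: HsA; rewrite !inE => /eqP ->.
  by rewrite eq_sym.
have Hcard : #|Mp M q :\: Mp M' q| <= #|Mp M' q :\: Mp M q|.
  have := cardsID (Mp M q) (Mp M' q); have := cardsID (Mp M' q) (Mp M q).
  rewrite setIC; have := HM0.2.1 q; move: Hf; rewrite /p_full => /eqP; lia.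
have H1 := subset_leq_card HAU; have H2 := subset_leq_card HBA.
split; first by lia.
move=> s0 t0 Hs0A Hs0B Hs0U _ _.
have Hsub : Mp M q :&: U \subset (Mp M q :\: Mp M' q) :\ s0.
  apply/subsetP => s Hs; rewrite in_setD1 (subsetP HAU _ Hs) andbT.
  apply/eqP => E; move: Hs; rewrite E in_setI; move: Hs0U => /negbTE ->.
  by rewrite andbF.
have := subset_leq_card Hsub.
have := cardsD1 s0 (Mp M q :\: Mp M' q); rewrite in_setD Hs0A Hs0B /=; lia.
Qed.

Lemma proj_b l sb q : sb \in Ml I M l ->
  (forall t, t \in Ml I M' l -> rankL I l t < rankL I l sb) -> lect I q = l ->
  #|Mp M' q :\: U| <= #|Mp M q :\: U| /\
  (forall s0 t0, s0 \in Mp M q -> s0 \notin Mp M' q -> s0 \notin U ->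
     t0 \in Mp M' q -> t0 \in U -> #|Mp M' q :\: U| < #|Mp M q :\: U|).
Proof.
move=> Hsb Hr Hl.
have D1 := cardsID (Mp M q) (Mp M' q :\: U).
have D2 := cardsID (Mp M' q) (Mp M q :\: U).
have S1 : #|(Mp M' q :\: U) :&: Mp M q| <= #|(Mp M q :\: U) :&: Mp M' q|.
  apply: subset_leq_card; apply/subsetP => x; rewrite !in_setI !in_setD.
  by case: (x \in U); case: (x \in Mp M q); case: (x \in Mp M' q).
suff [H1 H2] : #|(Mp M' q :\: U) :\: Mp M q| <= #|(Mp M q :\: U) :\: Mp M' q| /\
  (forall s0 t0, s0 \in Mp M q -> s0 \notin Mp M' q -> s0 \notin U ->
     t0 \in Mp M' q -> t0 \in U ->
     #|(Mp M' q :\: U) :\: Mp M q| < #|(Mp M q :\: U) :\: Mp M' q|).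
  split; first exact: arith_le D1 D2 S1 H1.
  by move=> s0 t0 a b c d e; exact: arith_lt D1 D2 S1 (H2 s0 t0 a b c d e).
case: (set_0Vmem ((Mp M' q :\: U) :\: Mp M q)) => [V0 | [t Ht]].
  rewrite V0 cards0; split=> // s0 t0 Hs0A Hs0B Hs0U _ _.
  by rewrite card_gt0; apply/set0Pn; exists s0; rewrite !in_setD Hs0A Hs0B Hs0U.
move: (Ht); rewrite !in_setD => /andP[HtA /andP[HtU HtB]].
have Mt' : M' t = Some q by move: HtB; rewrite inE => /eqP.
have HtA' : M t != Some q by move: HtA; rewrite inE.
have Hfl := notU_flip V HM0 HM0' HtU Mt' HtA'.
have HtMl : t \in Ml I M' l by rewrite inE Mt' Hl.
have Hrt := Hr t HtMl.
case: (E_lemma V HM0' HM Mt' Hfl) => [[Hf Hr'] | [_ _ _ Hr']]; last first.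
  by have := Hr' sb; rewrite Hl => /(_ Hsb); lia.
have HAB : Mp M q :\: Mp M' q \subset (Mp M q :\: U) :\: Mp M' q.
  apply/subsetP => u; rewrite !in_setD => /andP[HuB HuA]; rewrite HuB HuA !andbT.
  apply/negP => HuU.
  have Mu : M u = Some q by move: HuA; rewrite inE => /eqP.
  have Hru := Hr' u HuA.
  case: (E_lemma V HM0 HM' Mu HuU) => [[_ Hr2] | [_ _ _ Hr2]].
  + by have := ltn_trans (Hr2 t HtB) Hru; rewrite ltnn.
  + have := Hr2 t; rewrite inE Mt' eqxx => /(_ isT) H.
    by have := ltn_trans H Hru; rewrite ltnn.
have HVB : (Mp M' q :\: U) :\: Mp M q \subset Mp M' q :\: Mp M q.
  by apply/subsetP => x; rewrite !in_setD; case: (x \in U); case: (x \in Mp M q).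
have Hcard : #|Mp M' q :\: Mp M q| <= #|Mp M q :\: Mp M' q|.
  have := cardsID (Mp M q) (Mp M' q); have := cardsID (Mp M' q) (Mp M q).
  rewrite setIC; have := HM0'.2.1 q; move: Hf; rewrite /p_full => /eqP; lia.
have H1 := subset_leq_card HAB; have H2 := subset_leq_card HVB.
split; first exact: leq_trans H2 (leq_trans Hcard H1).
move=> s0 t0 _ _ _ Ht0B Ht0U.
have Ht0A : t0 \notin Mp M q.
  by have := U_neq Ht0U; move: Ht0B; rewrite !inE => /eqP ->.
have Hsub : (Mp M' q :\: U) :\: Mp M q \subset (Mp M' q :\: Mp M q) :\ t0.
  apply/subsetP => x Hx; rewrite in_setD1 (subsetP HVB _ Hx) andbT.
  apply/eqP => E; move: Hx; rewrite E !in_setD Ht0U.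
  by rewrite andbF.
have E1 := cardsD1 t0 (Mp M' q :\: Mp M q); rewrite in_setD Ht0A Ht0B /= in E1.
exact: arith3 E1 (subset_leq_card Hsub) Hcard H1.
Qed.

Lemma lect_le l :
  \sum_(q | lect I q == l) #|Mp M q :&: U| <= \sum_(q | lect I q == l) #|Mp M' q :&: U| /\
  (forall q0 s0 t0, lect I q0 == l -> s0 \in Mp M q0 -> s0 \notin Mp M' q0 -> s0 \notin U ->
     t0 \in Mp M' q0 -> t0 \in U ->
     \sum_(q | lect I q == l) #|Mp M q :&: U| < \sum_(q | lect I q == l) #|Mp M' q :&: U|).
Proof.
case: (boolP [exists u, [exists pb, [&& u \in U, M u == Some pb, lect I pb == l & p_under I M' pb]]]).
- move=> /existsP [u /existsP [pb /and4P [HuU /eqP Mu /eqP Hpl Hpu]]].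
  case: (E_lemma V HM0 HM' Mu HuU) => [[Hf _] | [_ Hlf Hun Hr]].
    by move: Hf; rewrite /p_full (ltn_eqF Hpu).
  rewrite Hpl in Hlf Hr.
  have Hsb : u \in Ml I M l by rewrite inE Mu Hpl.
  have Hpb q (h : lect I q == l) := proj_b Hsb Hr (eqP h).
  have HA : \sum_(q | lect I q == l) (#|Mp M q :&: U| + #|Mp M q :\: U|) = #|Ml I M l|.
    by rewrite card_Ml; apply: eq_bigr => q _; exact: cardsID.
  have HB : \sum_(q | lect I q == l) (#|Mp M' q :&: U| + #|Mp M' q :\: U|) = #|Ml I M' l|.
    by rewrite card_Ml; apply: eq_bigr => q _; exact: cardsID.
  have Hlcap : #|Ml I M l| <= #|Ml I M' l|.
    by move: Hlf; rewrite /l_full => /eqP ->; exact: HM0.2.2.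
  rewrite big_split /= in HA; rewrite big_split /= in HB.
  have Hle : \sum_(q | lect I q == l) #|Mp M' q :\: U| <= \sum_(q | lect I q == l) #|Mp M q :\: U|.
    by apply: leq_sum => q h; exact: (Hpb q h).1.
  split; first exact: arith4 HA HB Hlcap Hle.
  move=> q0 s0 t0 Hq0 a b c d e; apply: arith5 HA HB Hlcap _.
  apply: (@sum_lt _ (fun q => lect I q == l) (fun q => #|Mp M' q :\: U|) (fun q => #|Mp M q :\: U|) q0 Hq0).
    by move=> q h; exact: (Hpb q h).1.
  exact: (Hpb q0 Hq0).2 s0 t0 a b c d e.
- move=> Hno.
  have Hnb q : lect I q == l -> forall u, u \in Mp M q -> u \in U -> ~~ p_under I M' q.
    move=> Hq u HuA HuU; apply/negP => Hpu; apply: (negP Hno); apply/existsP; exists u.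
    apply/existsP; exists q; rewrite inE in HuA; by rewrite HuU HuA Hq Hpu.
  split; first by apply: leq_sum => q Hq; exact: (proj_nb (Hnb q Hq)).1.
  move=> q0 s0 t0 Hq0 a b c d e.
  apply: (@sum_lt _ (fun q => lect I q == l) (fun q => #|Mp M q :&: U|) (fun q => #|Mp M' q :&: U|) q0 Hq0).
    by move=> q Hq; exact: (proj_nb (Hnb q Hq)).1.
  exact: (proj_nb (Hnb q0 Hq0)).2 s0 t0 a b c d e.
Qed.

Lemma main_sec p : p_under I (meet_assign I M M') p -> p_under I M p \/ p_under I M' p.
Proof.
move=> Hmeet.
case: (boolP (p_under I M p)) => H1; first by left.
case: (boolP (p_under I M' p)) => H2; first by right.
exfalso.
have Hf1 : p_full I M p by apply: full_of_not_under => //; apply/negP.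
have Hf2 : p_full I M' p by apply: full_of_not_under => //; apply/negP.
case: (boolP [exists s0, [&& s0 \in Mp M p, s0 \notin Mp M' p & s0 \notin U]]) => Hs;
  case: (boolP [exists t0, (t0 \in Mp M' p) && (t0 \in U)]) => Ht.
- move/existsP: Hs => [s0 /and3P [a b c]]; move/existsP: Ht => [t0 /andP [d e]].
  have HF : \sum_q #|Mp M q :&: U| = #|U|.
    rewrite /Mp (fiber M U predT); apply: eq_card => s; rewrite [in LHS]inE.
    case: (boolP (s \in U)) => //= Hs; move: Hs; rewrite inE; by case: (M s).
  have HG : \sum_q #|Mp M' q :&: U| <= #|U|.
    rewrite /Mp (fiber M' U predT); apply: subset_leq_card; apply/subsetP => s.
    by rewrite [in X in X -> _]inE => /andP[].
  rewrite (partition_big (lect I) xpredT) // in HF.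
  rewrite (partition_big (lect I) xpredT) // in HG.
  have Hlt : \sum_(l | xpredT l) \sum_(q | xpredT q && (lect I q == l)) #|Mp M q :&: U| <
             \sum_(l | xpredT l) \sum_(q | xpredT q && (lect I q == l)) #|Mp M' q :&: U|.
    apply: (@sum_lt _ xpredT _ _ (lect I p)) => //= [l _|].
      exact: (lect_le l).1.
    exact: (lect_le (lect I p)).2 p s0 t0 (eqxx _) a b c d e.
  by have := leq_trans Hlt HG; rewrite HF ltnn.
- have Hsub : Mp M' p \subset Mp (meet_assign I M M') p.
    apply/subsetP => t Htb; move/existsPn: Ht => /(_ t); rewrite Htb /= => HtU.
    move: Htb HtU; rewrite !inE ffunE => /eqP ->.
    case: (M t) => [r|] // /negbTE ->.
    by case: ifP => [/eqP ->|].
  have := subset_leq_card Hsub; move: Hf2 Hmeet; rewrite /p_full /p_under => /eqP ->.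
  by move=> H3 H4; have := leq_trans H3 H4; rewrite ltnn.
- have Hsub : Mp M p \subset Mp (meet_assign I M M') p.
    apply/subsetP => s Hsa; move/existsPn: Hs => /(_ s); rewrite Hsa /=.
    move: Hsa; rewrite [s \in Mp M p]inE => /eqP Ms.
    rewrite !inE ffunE Ms; case E': (M' s) => [q|] //.
    by case: ifP => // _; case: ifP => // _; rewrite andbT negbK.
  have := subset_leq_card Hsub; move: Hf1 Hmeet; rewrite /p_full /p_under => /eqP ->.
  by move=> H3 H4; have := leq_trans H3 H4; rewrite ltnn.
- have Hsub : Mp M p \subset Mp (meet_assign I M M') p.
    apply/subsetP => s Hsa; move/existsPn: Hs => /(_ s); rewrite Hsa /=.
    move: Hsa; rewrite [s \in Mp M p]inE => /eqP Ms.
    rewrite !inE ffunE Ms; case E': (M' s) => [q|] //.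
    by case: ifP => // _; case: ifP => // _; rewrite andbT negbK.
  have := subset_leq_card Hsub; move: Hf1 Hmeet; rewrite /p_full /p_under => /eqP ->.
  by move=> H3 H4; have := leq_trans H3 H4; rewrite ltnn.
Qed.

End Main.

Theorem lemma6 (S P L : finType) (I : spa S P L) (M M' : assignment S P) (p : P) :
  valid_spa I -> stable I M -> stable I M' ->
  p_under I (meet_assign I M M') p ->
  p_under I M p \/ p_under I M' p.
Proof. move=> V HM HM'; exact: main_sec. Qed.
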